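(* Let $m\geq 1$ and let $f=a_0+a_1z+\cdots+a_mz^m\in\mathbb{Z}[z]$ be a primitive polynomial with $a_m\neq 0$ such that $a_0=\pm p^kd$ for some positive integers $k,d$ and a prime $p$ with $p\nmid d$, and such that every complex zero of $f$ lies outside the closed disk $\{z\in\mathbb{C}:|z|\leq d\}$. Suppose there is an index $j$ with $1\leq j\leq m$ such that $p\nmid a_j$. Then $f$ is a product of at most $\min\{k,j\}$ irreducible polynomials in $\mathbb{Z}[z]$. In particular, if $k=1$ or $j=1$, then $f$ is irreducible in $\mathbb{Z}[z]$.
   Context: A polynomial in $\mathbb{Z}[z]$ is primitive if the greatest common divisor of its coefficients is $1$. ''$f$ is a product of at most $r$ irreducible polynomials'' means that in a factorization of $f$ into irreducible elements of $\mathbb{Z}[z]$, the number of factors (counted with multiplicity) is at most $r$. *)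

(* Defs.v *)
From HB Require Import structures.
From mathcomp Require Import all_boot all_order all_algebra.
From mathcomp Require Import algC.
Set Implicit Arguments. Unset Strict Implicit. Unset Printing Implicit Defensive.
Import Order.TTheory GRing.Theory Num.Theory.
Local Open Scope ring_scope.

Definition primitive_Zpoly (f : {poly int}) : Prop :=
  \big[gcdz/0]_(i < size f) f`_i = 1.

Definition irreducible_Zpoly (g : {poly int}) : Prop :=
  [/\ g != 0, g \isn't a GRing.unit &
      forall a b : {poly int}, g = a * b ->
        a \is a GRing.unit \/ b \is a GRing.unit].

Definition prod_at_most_irr (f : {poly int}) (r : nat) : Prop :=
  exists s : seq {poly int},
    [/\ (size s <= r)%N, (forall g, g \in s -> irreducible_Zpoly g) &
        f = \prod_(g <- s) g].

(* Main.v *)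
Require Import Defs.
From HB Require Import structures.
From mathcomp Require Import all_boot all_order all_algebra.
From mathcomp Require Import algC.
From mathcomp Require Import zify.
From Stdlib Require Import Classical.
Import Order.TTheory GRing.Theory Num.Theory.
Local Open Scope ring_scope.

Lemma prod_gt (R : numDomainType) (T : eqType) (s : seq T) (F : T -> R) (c : R) :
  1 <= c -> s != [::] -> (forall x, x \in s -> c < F x) ->
  c < \prod_(x <- s) F x.
Proof.
move=> c1; elim: s => [//|x t IH] _ H.
rewrite big_cons.
have Hx : c < F x by apply: H; exact: mem_head.
case: t IH H => [|y t] IH H; first by rewrite big_nil mulr1.
have Ht : c < \prod_(z <- y :: t) F z by apply: IH => // z Hz; apply: H; rewrite inE Hz orbT.
rewrite -[c]mul1r; apply: ltr_pM => //; first by apply: le_trans c1.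
exact: le_lt_trans c1 Hx.
Qed.

Lemma coef0_big (g : {poly int}) (d : nat) :
  (1 < size g)%N -> (0 < d)%N ->
  (forall z : algC, root (map_poly (intr : int -> algC) g) z -> d%:R < `|z|) ->
  (d%:Z < `|g`_0|).
Proof.
move=> sg d0 Hr.
set G := map_poly (intr : int -> algC) g.
have [rs Hrs] := closed_field_poly_normal G.
have szG : size G = size g by apply: size_map_inj_poly; [exact: intr_inj| exact: rmorph0].
have lcG : lead_coef G = (lead_coef g)%:~R.
  by apply: lead_coef_map_inj; [exact: intr_inj| exact: rmorph0].
have g0 : g != 0 by rewrite -size_poly_eq0; case: (size g) sg.
have lc0 : lead_coef G != 0 by rewrite lcG intr_eq0 lead_coef_eq0.
have szrs : size g = (size rs).+1.
  by rewrite -szG {1}Hrs size_scale // size_prod_XsubC.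
have rsn : rs != [::] by apply/eqP => E0; move: sg; rewrite szrs E0.
have G0 : G`_0 = (g`_0)%:~R by rewrite coef_map.
have : `|G`_0| = `|lead_coef G| * \prod_(z <- rs) `|z|.
  rewrite {1}Hrs coefZ coef0_prod_XsubC normrM normrM normrX normrN1 expr1n mul1r.
  by rewrite normr_prod.
rewrite G0 lcG -!intr_norm => E.
have : (d%:Z)%:~R < (`|g`_0|)%:~R :> algC.
  rewrite E; apply: (@lt_le_trans _ _ (\prod_(z <- rs) `|z|)).
    apply: prod_gt => //; first by rewrite (_ : (d%:Z)%:~R = d%:R) ?ler1n // .
    move=> z zin.
    rewrite (_ : (d%:Z)%:~R = d%:R) //; apply: Hr.
    have : root (lead_coef G *: \prod_(z <- rs) ('X - z%:P)) z.
      by rewrite rootZ // root_prod_XsubC.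
    by rewrite -Hrs.
  apply: ler_peMl; first by apply: prodr_ge0 => i _; apply: normr_ge0.
  have : lead_coef g != 0 by rewrite lead_coef_eq0.
  rewrite ler1z; lia.
by rewrite (ltr_int algC).
Qed.
Lemma prod_coef_dvd (p : int) (s : seq {poly int}) :
  (forall g, g \in s -> (p %| g`_0)%Z) ->
  (p ^+ size s %| (\prod_(g <- s) g)`_0)%Z /\
  (forall i, (i < size s)%N -> (p %| (\prod_(g <- s) g)`_i)%Z).
Proof.
elim: s => [|g t IH] H; first by rewrite big_nil coefC /= expr0 dvd1z.
have Hg : (p %| g`_0)%Z by apply: H; exact: mem_head.
have [IH0 IHi] : (p ^+ size t %| (\prod_(g <- t) g)`_0)%Z /\
  (forall i, (i < size t)%N -> (p %| (\prod_(g <- t) g)`_i)%Z).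
  by apply: IH => x xt; apply: H; rewrite inE xt orbT.
rewrite big_cons; split.
  by rewrite coef0M /= exprS dvdz_mul.
move=> i ilt; rewrite coefM; apply: rpred_sum => -[jj /= jlt] _.
case: jj jlt => [|jj] jlt; first by rewrite dvdz_mulr.
apply: dvdz_mull; apply: IHi; rewrite /= in ilt; lia.
Qed.

Lemma u1 (c : int) : `|c|%N = 1%N -> c \is a GRing.unit.
Proof. move=> h; lia. Qed.

Lemma gcd_dvd (c : int) (f : {poly int}) :
  (forall i, (c %| f`_i)%Z) -> (c %| \big[gcdz/0]_(i < size f) f`_i)%Z.
Proof.
move=> H; apply: (big_ind (fun x => (c %| x)%Z)) => //.
by move=> x y hx hy; rewrite dvdz_gcd hx hy.
Qed.

Lemma boundL (f : {poly int}) (m p k d j : nat) :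
  size f = m.+1 ->
  primitive_Zpoly f ->
  prime p -> (0 < d)%N -> ~~ (p %| d)%N ->
  (f`_0 = (p ^ k * d)%N%:Z \/ f`_0 = - (p ^ k * d)%N%:Z) ->
  (forall z : algC, root (map_poly (intr : int -> algC) f) z -> d%:R < `|z|) ->
  ~~ ((p%:Z %| f`_j)%Z) ->
  forall s : seq {poly int}, (forall g, g \in s -> g \isn't a GRing.unit) ->
  f = \prod_(g <- s) g -> (size s <= k)%N /\ (size s <= j)%N.
Proof.
move=> Hsz Hprim pp d0 pd H0 Hroot Hj s Hs Hf.
have fnz : f != 0 by rewrite -size_poly_eq0 Hsz.
have habs : absz (f`_0) = (p ^ k * d)%N by case: H0 => ->; rewrite ?abszN.
have Hp0 : forall g, g \in s -> (p%:Z %| g`_0)%Z.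
  move=> g gs.
  have [h Hh] : exists h, f = g * h.
    by exists (\prod_(x <- rem g s) x); rewrite Hf (big_rem _ gs).
  have gnz : g != 0 by apply/eqP => g0; move: fnz; rewrite Hh g0 mul0r eqxx.
  have sg : (1 < size g)%N.
    rewrite ltnNge; apply/negP => sg1.
    have gc := size1_polyC sg1.
    have gu : g \is a GRing.unit.
      rewrite poly_unitE.
      have c1 : (g`_0 %| 1)%Z.
        have Hp' : \big[gcdz/0]_(i < size f) f`_i = 1 := Hprim.
        have := @gcd_dvd (g`_0) f; rewrite Hp'; apply => i.
        have -> : f`_i = g`_0 * h`_i by rewrite Hh {1}gc coefCM.
        exact: dvdz_mulr.
      have gsz : size g == 1%N.
        by rewrite eqn_leq sg1 /= lt0n size_poly_eq0.
      by rewrite gsz /=; move: c1; rewrite dvdz1 => /eqP; exact: u1.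
    by move: (Hs g gs); rewrite gu.
  have Hd : (d%:Z < `|g`_0|).
    apply: (@coef0_big g d sg d0) => z rz; apply: Hroot.
    by rewrite Hh rmorphM rootM rz.
  apply/negPn/negP => np.
  move: np; rewrite dvdzE /= => np.
  have cop : coprime (absz (g`_0)%R) (p ^ k).
    by rewrite coprime_sym coprimeXl // prime_coprime.
  have dv : (absz (g`_0)%R %| p ^ k * d)%N by rewrite -habs Hh coef0M abszM dvdn_mulr.
  rewrite Gauss_dvdr // in dv.
  have := dvdn_leq d0 dv; lia.
have [H0' Hi] := @prod_coef_dvd p%:Z s Hp0.
rewrite -Hf in H0' Hi.
split.
  move: H0'; rewrite dvdzE habs abszX /= => H0'.
  have cop : coprime (p ^ size s) d by rewrite coprimeXl // prime_coprime.
  rewrite Gauss_dvdl // dvdn_Pexp2l ?prime_gt1 // in H0'.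
rewrite leqNgt; apply/negP => jlt; move: (Hi j jlt); by rewrite (negbTE Hj).
Qed.

Lemma exists_irr (f : {poly int}) (k : nat) :
  f != 0 ->
  (forall s : seq {poly int}, (forall g, g \in s -> g \isn't a GRing.unit) ->
     f = \prod_(g <- s) g -> (size s <= k)%N) ->
  f \isn't a GRing.unit ->
  exists t : seq {poly int},
    (forall g, g \in t -> irreducible_Zpoly g) /\ f = \prod_(g <- t) g.
Proof.
move=> fnz Hb fnu.
suff H : forall n s, (k - size s < n)%N ->
    (forall g, g \in s -> g \isn't a GRing.unit) -> f = \prod_(g <- s) g ->
    exists t : seq {poly int},
    (forall g, g \in t -> irreducible_Zpoly g) /\ f = \prod_(g <- t) g.
  apply: (H k.+1 [:: f]); first by rewrite /=; lia.
    by move=> g; rewrite inE => /eqP ->.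
  by rewrite big_seq1.
elim=> [|n IH] s // Hn Hs Hf.
case: (classic (forall g, g \in s -> irreducible_Zpoly g)) => Hirr.
  by exists s.
have [g Hg] := not_all_ex_not _ _ Hirr.
have [gs Hng] := imply_to_and _ _ Hg.
have Hfr : f = g * \prod_(x <- rem g s) x by rewrite Hf (big_rem _ gs).
have gnz : g != 0 by apply/eqP => g0; move: fnz; rewrite Hfr g0 mul0r eqxx.
have gnu := Hs g gs.
have Hng' : ~ (forall a b : {poly int}, g = a * b ->
        a \is a GRing.unit \/ b \is a GRing.unit).
  by move=> Hc; apply: Hng; split.
have [a Ha] := not_all_ex_not _ _ Hng'.
have [b Hab] := not_all_ex_not _ _ Ha.
have [Egab Hor] := imply_to_and _ _ Hab.
have [au bu] := not_or_and _ _ Hor.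
have Hf' : f = \prod_(x <- a :: b :: rem g s) x.
  by rewrite big_cons big_cons mulrA -Egab.
have Hs' : forall x, x \in a :: b :: rem g s -> x \isn't a GRing.unit.
  move=> x; rewrite !inE => /orP [/eqP ->|/orP [/eqP ->|xr]].
  - by apply/negP.
  - by apply/negP.
  by apply: Hs; apply: (mem_rem xr).
have s0 : (0 < size s)%N by case: (s) gs.
have sz' : size (a :: b :: rem g s) = (size s).+1.
  by rewrite /= size_rem //; move: s0; case: (size s).
have := Hb _ Hs' Hf'; rewrite sz' => Hk.
apply: (IH (a :: b :: rem g s)) => //.
rewrite sz'; lia.
Qed.


Theorem theorem2 (f : {poly int}) (m p k d j : nat) :
  (1 <= m)%N ->
  size f = m.+1 ->
  primitive_Zpoly f ->
  prime p -> (0 < k)%N -> (0 < d)%N -> ~~ (p %| d)%N ->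
  (f`_0 = (p ^ k * d)%N%:Z \/ f`_0 = - (p ^ k * d)%N%:Z) ->
  (forall z : algC, root (map_poly (intr : int -> algC) f) z -> d%:R < `|z|) ->
  (1 <= j <= m)%N -> ~~ ((p%:Z %| f`_j)%Z) ->
  prod_at_most_irr f (minn k j) /\
  ((k = 1%N \/ j = 1%N) -> irreducible_Zpoly f).
Proof.
move=> m1 Hsz Hprim pp k0 d0 pd H0 Hroot /andP[j1 jm] Hj.
have fnz : f != 0 by rewrite -size_poly_eq0 Hsz.
have Hbd := @boundL f m p k d j Hsz Hprim pp d0 pd H0 Hroot Hj.
have fnu : f \isn't a GRing.unit.
  by rewrite poly_unitE Hsz /=; move: m1; case: (m).
have [t [Ht Hft]] := @exists_irr f k fnz (fun s Hs Hf => (Hbd s Hs Hf).1) fnu.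
split.
  exists t; split => //.
  have [a b] := Hbd t (fun g gt => let: And3 _ x _ := Ht g gt in x) Hft.
  by rewrite leq_min a b.
move=> Hkj; split => // a b Eab.
case: (boolP (a \is a GRing.unit)) => au; first by left.
case: (boolP (b \is a GRing.unit)) => bu; first by right.
have Hs : forall x, x \in [:: a; b] -> x \isn't a GRing.unit.
  by move=> x; rewrite !inE => /orP [/eqP ->|/eqP ->].
have Hp2 : a * b = \prod_(x <- [:: a; b]) x by rewrite big_cons big_seq1.
have [h1 h2] := Hbd [:: a; b] Hs (etrans Eab Hp2).
by exfalso; move: h1 h2 => /=; lia.
Qed.
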